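(* Assume the standing setup below with $0<T_2<T_1<1$. Then for every $q\in[0,1]$ with $\psi(q)\in(0,1)$, the function $\psi$ is differentiable at $q$ and $\frac{d\psi}{dq}(q)>0$; that is, $\psi$ is strictly increasing in $q$ wherever $\psi\in(0,1)$.
   Context: Standing setup. $P$ is a probability distribution on $\{0,1,\dots,k_{\max}\}$ (a degree distribution with finite maximum degree $k_{\max}$) with mean $\langle k\rangle=\sum_k kP(k)>0$. The excess degree distribution is $Q(k)=(k+1)P(k+1)/\langle k\rangle$ for $k\ge 0$. Fix $T_1,T_2\in(0,1)$. For $q\in[0,1]$ and integers $k_1,k_2\ge 0$ set $$P_q(k_1,k_2)=\binom{k_1+k_2}{k_2}q^{k_2}(1-q)^{k_1}P(k_1+k_2),\qquad Q_q(k_1,k_2)=\binom{k_1+k_2}{k_2}q^{k_2}(1-q)^{k_1}Q(k_1+k_2)$$ (with $0^0=1$). For $u\in[0,1]$ define $$F_q(u)=\sum_{k_1,k_2\ge0}\big(1+(u-1)T_1\big)^{k_1}\big(1+(u-1)T_2\big)^{k_2}Q_q(k_1,k_2),\qquad G_q(u)=\sum_{k_1,k_2\ge0}\big(1+(u-1)T_1\big)^{k_1}\big(1+(u-1)T_2\big)^{k_2}P_q(k_1,k_2).$$ Let $u^*(q)$ be the smallest solution in $[0,1]$ of the fixed point equation $u=F_q(u)$ (note $u=1$ is always a solution), and set $\psi(q)=G_q(u^*(q))$ (the probability that a random node is not in the rumor outbreak; $1-\psi$ is the outbreak size). *)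

(* Defs.v *)
From Stdlib Require Import Reals Lra ClassicalEpsilon.
Open Scope R_scope.

(* Degree distribution P : nat -> R, supported on {0..kmax}. *)
Definition mean_deg (P : nat -> R) (kmax : nat) : R :=
  sum_f_R0 (fun k => INR k * P k) kmax.

Definition Qex (P : nat -> R) (kmax : nat) (k : nat) : R :=
  INR (S k) * P (S k) / mean_deg P kmax.

Definition split_dist (D : nat -> R) (q : R) (k1 k2 : nat) : R :=
  Binomial.C (k1 + k2) k2 * q ^ k2 * (1 - q) ^ k1 * D (k1 + k2)%nat.

(* Generating sum over k1,k2 >= 0; all terms with k1 + k2 > kmax vanish
   (P and Q vanish there), so summing k1,k2 over 0..kmax is the full sum. *)
Definition gen_sum (D : nat -> R) (kmax : nat) (T1 T2 q u : R) : R :=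
  sum_f_R0 (fun k1 =>
    sum_f_R0 (fun k2 =>
      (1 + (u - 1) * T1) ^ k1 * (1 + (u - 1) * T2) ^ k2 * split_dist D q k1 k2)
    kmax) kmax.

Definition Fq (P : nat -> R) (kmax : nat) (T1 T2 q u : R) : R :=
  gen_sum (Qex P kmax) kmax T1 T2 q u.

Definition Gq (P : nat -> R) (kmax : nat) (T1 T2 q u : R) : R :=
  gen_sum P kmax T1 T2 q u.

Definition smallest_fp (P : nat -> R) (kmax : nat) (T1 T2 q u : R) : Prop :=
  0 <= u <= 1 /\ u = Fq P kmax T1 T2 q u /\
  forall v, 0 <= v <= 1 -> v = Fq P kmax T1 T2 q v -> u <= v.

(* u*(q): chosen by Hilbert epsilon (the smallest fixed point exists). *)
Definition ustar (P : nat -> R) (kmax : nat) (T1 T2 q : R) : R :=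
  epsilon (inhabits 0) (fun u => smallest_fp P kmax T1 T2 q u).

Definition psi (P : nat -> R) (kmax : nat) (T1 T2 q : R) : R :=
  Gq P kmax T1 T2 q (ustar P kmax T1 T2 q).

(* Derivative of f at q, relative to the domain [0,1] (one-sided at the
   endpoints, ordinary two-sided derivative in the interior). *)
Definition has_deriv_on01 (f : R -> R) (q l : R) : Prop :=
  forall eps, 0 < eps -> exists delta, 0 < delta /\
    forall h, h <> 0 -> Rabs h < delta -> 0 <= q + h <= 1 ->
      Rabs ((f (q + h) - f q) / h - l) < eps.

(* Main.v *)
Require Import Defs.
From Stdlib Require Import Reals Lra Lia ClassicalEpsilon Classical.
Open Scope R_scope.

Definition gpoly (c : nat -> R) (K : nat) (y : R) := sum_f_R0 (fun k => c k * y ^ k) K.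
Definition gder (c : nat -> R) (K : nat) (y : R) := sum_f_R0 (fun k => c k * (INR k * y ^ pred k)) K.
Definition Tq (T1 T2 q : R) := (1 - q) * T1 + q * T2.
Definition yv (T1 T2 q u : R) := 1 + (u - 1) * Tq T1 T2 q.

Lemma trunc_sum : forall f m K, (m <= K)%nat -> (forall j, (m < j <= K)%nat -> f j = 0) ->
  sum_f_R0 f K = sum_f_R0 f m.
Proof.
  intros f m K; induction K; intros Hm Hz.
  - assert (m = 0%nat) by lia; subst; reflexivity.
  - destruct (Nat.eq_dec m (S K)) as [->|Hne]; [reflexivity|].
    rewrite tech5, Hz by lia. rewrite IHK by (try lia; intros; apply Hz; lia). ring.
Qed.

Lemma tri_diag : forall (h : nat -> nat -> R) K,
  sum_f_R0 (fun k1 => sum_f_R0 (fun k2 => h k1 k2) (K - k1)) K =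
  sum_f_R0 (fun n => sum_f_R0 (fun k1 => h k1 (n - k1)%nat) n) K.
Proof.
  intros h K; induction K.
  - reflexivity.
  - rewrite !tech5. rewrite <- IHK.
    rewrite Nat.sub_diag. simpl (sum_f_R0 _ 0).
    rewrite (sum_eq (fun k1 => sum_f_R0 (fun k2 => h k1 k2) (S K - k1))
               (fun k1 => sum_f_R0 (fun k2 => h k1 k2) (K - k1) + h k1 (S K - k1)%nat)).
    2:{ intros i Hi. replace (S K - i)%nat with (S (K - i)) by lia. rewrite tech5. reflexivity. }
    rewrite sum_plus. ring.
Qed.

Lemma closed_form : forall D K T1 T2 q u, (forall k, (K < k)%nat -> D k = 0) ->
  gen_sum D K T1 T2 q u = gpoly D K (yv T1 T2 q u).
Proof.
  intros D K T1 T2 q u HD. unfold gen_sum, gpoly.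
  set (h := fun k1 k2 => (1 + (u - 1) * T1) ^ k1 * (1 + (u - 1) * T2) ^ k2 * split_dist D q k1 k2).
  transitivity (sum_f_R0 (fun k1 => sum_f_R0 (fun k2 => h k1 k2) K) K); [reflexivity|].
  rewrite (sum_eq _ (fun k1 => sum_f_R0 (fun k2 => h k1 k2) (K - k1))).
  2:{ intros i Hi. apply trunc_sum; [lia|]. intros j Hj. unfold h, split_dist.
      rewrite HD by lia. ring. }
  rewrite tri_diag. apply sum_eq. intros n Hn.
  unfold yv, Tq.
  replace (1 + (u - 1) * ((1 - q) * T1 + q * T2)) with
    ((1 + (u - 1) * T1) * (1 - q) + (1 + (u-1) * T2) * q) by ring.
  rewrite binomial, scal_sum. apply sum_eq. intros i Hi.
  unfold h, split_dist. replace (i + (n - i))%nat with n by lia.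
  rewrite <- pascal_step1 by lia. rewrite !Rpow_mult_distr. ring.
Qed.
Definition em (k : nat) (y z : R) := y ^ k - z ^ k - INR k * z ^ pred k * (y - z).

Lemma pow01 : forall z n, 0 <= z <= 1 -> 0 <= z ^ n <= 1.
Proof. intros z n Hz; split; [apply pow_le; lra|]. rewrite <- (pow1 n). apply pow_incr; lra. Qed.

Lemma em_rec : forall k y z, em (S k) y z = y * em k y z + INR k * z ^ pred k * (y - z) ^ 2.
Proof.
  intros k y z; unfold em. destruct k.
  - simpl. ring.
  - cbn [pred]. rewrite !S_INR. simpl. ring.
Qed.

Lemma em_nonneg : forall k y z, 0 <= y -> 0 <= z -> 0 <= em k y z.
Proof.
  intros k y z Hy Hz; induction k.
  - unfold em; simpl; lra.
  - rewrite em_rec. apply Rplus_le_le_0_compat.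
    + apply Rmult_le_pos; lra.
    + apply Rmult_le_pos; [apply Rmult_le_pos; [apply pos_INR|apply pow_le; lra]|].
      apply pow2_ge_0.
Qed.

Lemma em_bound : forall k y z, 0 <= y <= 1 -> 0 <= z <= 1 -> Rabs (em k y z) <= INR k * INR k * (y - z) ^ 2.
Proof.
  intros k y z Hy Hz; induction k.
  - unfold em; simpl. replace (1 - 1 - 0 * 1 * (y - z)) with 0 by ring. rewrite Rabs_R0. lra.
  - rewrite em_rec, S_INR.
    pose proof (pow01 z (pred k) Hz) as Hp. pose proof (pos_INR k) as Hk.
    pose proof (pow2_ge_0 (y - z)) as Hd.
    eapply Rle_trans; [apply Rabs_triang|].
    rewrite !Rabs_mult. rewrite (Rabs_right (INR k)) by lra.
    rewrite (Rabs_right (z ^ pred k)) by lra. rewrite (Rabs_right ((y-z)^2)) by lra.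
    rewrite (Rabs_right y) by lra.
    assert (y * Rabs (em k y z) <= Rabs (em k y z)).
    { pose proof (Rabs_pos (em k y z)). nra. }
    assert (INR k * z ^ pred k * (y - z) ^ 2 <= INR k * (y-z)^2).
    { apply Rmult_le_compat_r; [lra|]. nra. }
    nra.
Qed.

Lemma em_strict : forall k x, (2 <= k)%nat -> 0 < x < 1 -> 0 < em k 1 x.
Proof.
  intros k x Hk Hx. destruct k as [|k]; [lia|]. rewrite em_rec.
  pose proof (em_nonneg k 1 x ltac:(lra) ltac:(lra)).
  assert (0 < INR k) by (apply lt_0_INR; lia).
  assert (0 < x ^ pred k) by (apply pow_lt; lra).
  assert (0 < (1 - x)^2) by (apply pow_lt; lra).
  assert (0 < INR k * x ^ pred k * (1 - x) ^ 2) by (apply Rmult_lt_0_compat; [apply Rmult_lt_0_compat|]; lra).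
  lra.
Qed.

Lemma pow_lip : forall k y z, 0 <= y <= 1 -> 0 <= z <= 1 -> Rabs (y ^ k - z ^ k) <= INR k * Rabs (y - z).
Proof.
  intros k y z Hy Hz; induction k.
  - simpl. replace (1-1) with 0 by ring. rewrite Rabs_R0. lra.
  - replace (y ^ S k - z ^ S k) with (y * (y ^ k - z ^ k) + z ^ k * (y - z)) by (simpl; ring).
    rewrite S_INR. eapply Rle_trans; [apply Rabs_triang|]. rewrite !Rabs_mult.
    pose proof (pow01 z k Hz). rewrite (Rabs_right y) by lra. rewrite (Rabs_right (z^k)) by lra.
    pose proof (Rabs_pos (y ^ k - z ^ k)). pose proof (Rabs_pos (y - z)).
    nra.
Qed.
Lemma gpoly_em : forall c K y z,
  gpoly c K y - gpoly c K z - gder c K z * (y - z) = sum_f_R0 (fun k => c k * em k y z) K.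
Proof.
  intros c K y z; unfold gpoly, gder; induction K.
  - simpl. unfold em. simpl. ring.
  - rewrite !tech5. rewrite <- IHK. unfold em. ring.
Qed.

Lemma gpoly_diff : forall c K y z,
  gpoly c K y - gpoly c K z = sum_f_R0 (fun k => c k * (y ^ k - z ^ k)) K.
Proof.
  intros c K y z; unfold gpoly; induction K; simpl in *.
  - ring.
  - rewrite <- IHK. ring.
Qed.

Lemma sum_pos_one : forall f K j, (forall k, 0 <= f k) -> (j <= K)%nat -> 0 < f j -> 0 < sum_f_R0 f K.
Proof.
  intros f K j Hf; induction K; intros Hj Hpos.
  - assert (j = 0%nat) by lia; subst; simpl; lra.
  - rewrite tech5. destruct (Nat.eq_dec j (S K)) as [->|].
    + pose proof (cond_pos_sum f K Hf). lra.
    + pose proof (Hf (S K)). assert (0 < sum_f_R0 f K) by (apply IHK; [lia|lra]). lra.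
Qed.


Definition K1 c K := sum_f_R0 (fun k => c k * INR k) K.
Definition K2 c K := sum_f_R0 (fun k => c k * (INR k * INR k)) K.

Lemma K1_nn c K (cnn : forall k, 0 <= c k) : 0 <= K1 c K.
Proof. apply cond_pos_sum; intros; apply Rmult_le_pos; [apply cnn|apply pos_INR]. Qed.
Lemma K2_nn c K (cnn : forall k, 0 <= c k) : 0 <= K2 c K.
Proof. apply cond_pos_sum; intros; apply Rmult_le_pos; [apply cnn|apply Rmult_le_pos; apply pos_INR]. Qed.

Lemma gpoly_lip c K (cnn : forall k, 0 <= c k) : forall y z, 0 <= y <= 1 -> 0 <= z <= 1 ->
  Rabs (gpoly c K y - gpoly c K z) <= K1 c K * Rabs (y - z).
Proof.
  intros y z Hy Hz. rewrite gpoly_diff. eapply Rle_trans; [apply Rsum_abs|].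
  unfold K1. rewrite Rmult_comm, scal_sum. apply sum_Rle. intros n _.
  rewrite Rabs_mult, (Rabs_right (c n)) by (apply Rle_ge, cnn).
  apply Rle_trans with (c n * (INR n * Rabs (y-z))); [|right; ring].
  apply Rmult_le_compat_l; [apply cnn|]. apply pow_lip; auto.
Qed.

Lemma gpoly_taylor c K (cnn : forall k, 0 <= c k) : forall y z, 0 <= y <= 1 -> 0 <= z <= 1 ->
  Rabs (gpoly c K y - gpoly c K z - gder c K z * (y - z)) <= K2 c K * (y - z) ^ 2.
Proof.
  intros y z Hy Hz. rewrite gpoly_em. eapply Rle_trans; [apply Rsum_abs|].
  unfold K2. rewrite Rmult_comm, scal_sum. apply sum_Rle. intros n _.
  rewrite Rabs_mult, (Rabs_right (c n)) by (apply Rle_ge, cnn).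
  apply Rle_trans with (c n * (INR n * INR n * (y-z)^2)); [|right; ring].
  apply Rmult_le_compat_l; [apply cnn|]. apply em_bound; auto.
Qed.

Lemma gpoly_tangent c K (cnn : forall k, 0 <= c k) : forall y z, 0 <= y -> 0 <= z ->
  0 <= gpoly c K y - gpoly c K z - gder c K z * (y - z).
Proof.
  intros y z Hy Hz. rewrite gpoly_em. apply cond_pos_sum. intros n.
  apply Rmult_le_pos; [apply cnn|apply em_nonneg; auto].
Qed.

Lemma gpoly_one c K (cnn : forall k, 0 <= c k) : gpoly c K 1 = sum_f_R0 c K.
Proof. unfold gpoly. apply sum_eq. intros; rewrite pow1; ring. Qed.

Lemma slope_lt1 c K (cnn : forall k, 0 <= c k) : forall T x, sum_f_R0 c K = 1 -> 0 < T < 1 -> 0 < x < 1 ->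
  1 - x = T * (1 - gpoly c K x) -> T * gder c K x < 1.
Proof.
  intros T x Hs HT Hx Hfix.
  destruct (classic (exists j, (2 <= j <= K)%nat /\ 0 < c j)) as [[j [Hj Hcj]]|Hno].
  - assert (0 < sum_f_R0 (fun k => c k * em k 1 x) K).
    { apply (sum_pos_one _ K j).
      - intros k; apply Rmult_le_pos; [apply cnn|apply em_nonneg; lra].
      - lia.
      - apply Rmult_lt_0_compat; [lra|apply em_strict; [lia|lra]]. }
    rewrite <- gpoly_em, (gpoly_one c K cnn), Hs in H.
    assert (T * (gder c K x * (1 - x)) < T * (1 - gpoly c K x)) by (apply Rmult_lt_compat_l; lra).
    nra.
  - assert (gder c K x <= sum_f_R0 c K).
    { unfold gder. apply sum_Rle. intros n Hn.
      destruct n as [|[|n]].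
      + simpl. pose proof (cnn 0%nat). lra.
      + simpl. lra.
      + assert (c (S (S n)) = 0).
        { destruct (Rle_lt_or_eq_dec 0 _ (cnn (S (S n)))) as [Hl|He]; [|auto].
          exfalso; apply Hno; exists (S (S n)); split; [lia|auto]. }
        rewrite H; lra. }
    nra.
Qed.

Lemma gpoly_cont c K (cnn : forall k, 0 <= c k) : continuity (gpoly c K).
Proof.
  unfold gpoly. clear -cnn. induction K as [|K' IH].
  - cbn [sum_f_R0]. intros x. apply continuity_pt_mult; [apply continuity_pt_const; intros a b; reflexivity|].
    apply derivable_continuous_pt, derivable_pt_pow.
  - cbn [sum_f_R0]. intros x. apply (continuity_pt_plus (fun y => sum_f_R0 (fun k => c k * y ^ k) K')
       (fun y => c (S K') * y ^ (S K'))); [apply IH|].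
    apply continuity_pt_mult; [apply continuity_pt_const; intros a b; reflexivity|].
    apply derivable_continuous_pt, derivable_pt_pow.
Qed.


Definition Hyp P kmax T1 T2 := (forall k, 0 <= P k) /\ (forall k, (kmax < k)%nat -> P k = 0) /\
  sum_f_R0 P kmax = 1 /\ 0 < mean_deg P kmax /\ 0 < T2 /\ T2 < T1 /\ T1 < 1.

Lemma sum_shift : forall f K, sum_f_R0 f (S K) = f 0%nat + sum_f_R0 (fun k => f (S k)) K.
Proof. intros f K; induction K; [simpl; ring|]. rewrite tech5, IHK, tech5. ring. Qed.

Lemma Qnn : forall P kmax T1 T2, Hyp P kmax T1 T2 -> forall k, 0 <= Qex P kmax k.
Proof.
  intros P kmax T1 T2 (HP & _ & _ & Hm & _) k. unfold Qex, Rdiv.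
  apply Rmult_le_pos; [apply Rmult_le_pos; [apply pos_INR|apply HP]|].
  left; apply Rinv_0_lt_compat; auto.
Qed.

Lemma Qsum : forall P kmax T1 T2, Hyp P kmax T1 T2 -> sum_f_R0 (Qex P kmax) kmax = 1.
Proof.
  intros P kmax T1 T2 (HP & Hs & _ & Hm & _). unfold Qex, Rdiv.
  transitivity (/ mean_deg P kmax * sum_f_R0 (fun k => INR (S k) * P (S k)) kmax).
  { rewrite scal_sum. apply sum_eq. intros; ring. }
  assert (sum_f_R0 (fun k => INR (S k) * P (S k)) kmax = mean_deg P kmax).
  { unfold mean_deg. pose proof (sum_shift (fun k => INR k * P k) kmax) as E.
    rewrite tech5, (Hs (S kmax)) in E by lia. cbn beta in E.
    replace (INR 0 * P 0%nat) with 0 in E by (simpl; ring). lra. }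
  rewrite H. field. lra.
Qed.

Lemma F_cf : forall P kmax T1 T2 q u, Hyp P kmax T1 T2 ->
  Fq P kmax T1 T2 q u = gpoly (Qex P kmax) kmax (yv T1 T2 q u).
Proof.
  intros P kmax T1 T2 q u (HP & Hs & _). unfold Fq. apply closed_form.
  intros k Hk. unfold Qex. rewrite Hs by lia. unfold Rdiv; ring.
Qed.

Lemma G_cf : forall P kmax T1 T2 q u, Hyp P kmax T1 T2 ->
  Gq P kmax T1 T2 q u = gpoly P kmax (yv T1 T2 q u).
Proof.
  intros P kmax T1 T2 q u (HP & Hs & _). unfold Gq. apply closed_form. auto.
Qed.

Lemma Tq_bounds : forall T1 T2 q, T2 < T1 -> 0 <= q <= 1 -> T2 <= Tq T1 T2 q <= T1.
Proof. intros; unfold Tq; split; nra. Qed.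

Lemma yv_bounds : forall T1 T2 q u, 0 < T2 -> T2 < T1 -> T1 < 1 -> 0 <= q <= 1 -> 0 <= u <= 1 ->
  0 < yv T1 T2 q u <= 1.
Proof. intros. pose proof (Tq_bounds T1 T2 q H0 H2). unfold yv. split; nra. Qed.

Lemma fp_slope : forall P kmax T1 T2 q z, Hyp P kmax T1 T2 -> 0 <= q <= 1 -> 0 <= z < 1 ->
  Fq P kmax T1 T2 q z = z -> Tq T1 T2 q * gder (Qex P kmax) kmax (yv T1 T2 q z) < 1.
Proof.
  intros P kmax T1 T2 q z H Hq Hz Hfix. pose proof H as (HP & Hs & _ & Hm & H2 & H21 & H1).
  rewrite F_cf in Hfix by auto. pose proof (Tq_bounds T1 T2 q H21 Hq).
  apply (slope_lt1 _ _ (Qnn P kmax T1 T2 H)); [apply (Qsum P kmax T1 T2 H)|lra| |].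
  - unfold yv. split; nra.
  - rewrite Hfix. unfold yv. ring.
Qed.

Lemma F_tangent : forall P kmax T1 T2 q z v, Hyp P kmax T1 T2 -> 0 <= q <= 1 -> 0 <= z <= 1 -> 0 <= v <= 1 ->
  Fq P kmax T1 T2 q v - v >= (Fq P kmax T1 T2 q z - z) +
     (1 - Tq T1 T2 q * gder (Qex P kmax) kmax (yv T1 T2 q z)) * (z - v).
Proof.
  intros P kmax T1 T2 q z v H Hq Hz Hv. pose proof H as (HP & Hs & _ & Hm & H2 & H21 & H1).
  rewrite !F_cf by auto.
  pose proof (yv_bounds T1 T2 q z H2 H21 H1 Hq Hz). pose proof (yv_bounds T1 T2 q v H2 H21 H1 Hq Hv).
  pose proof (gpoly_tangent _ kmax (Qnn P kmax T1 T2 H) (yv T1 T2 q v) (yv T1 T2 q z) ltac:(lra) ltac:(lra)) as Ht.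
  assert (E : gder (Qex P kmax) kmax (yv T1 T2 q z) * (yv T1 T2 q v - yv T1 T2 q z) =
     Tq T1 T2 q * gder (Qex P kmax) kmax (yv T1 T2 q z) * (v - z)) by (unfold yv; ring).
  rewrite E in Ht. nra.
Qed.

Lemma fp_smallest : forall P kmax T1 T2 q z, Hyp P kmax T1 T2 -> 0 <= q <= 1 -> 0 <= z < 1 ->
  Fq P kmax T1 T2 q z = z -> smallest_fp P kmax T1 T2 q z.
Proof.
  intros P kmax T1 T2 q z H Hq Hz Hfix.
  pose proof (fp_slope P kmax T1 T2 q z H Hq Hz Hfix).
  split; [lra|]. split; [auto|]. intros v Hv Hfv.
  pose proof (F_tangent P kmax T1 T2 q z v H Hq ltac:(lra) Hv).
  rewrite <- Hfv, Hfix in H1. nra.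
Qed.

Lemma F_one : forall P kmax T1 T2 q, Hyp P kmax T1 T2 -> Fq P kmax T1 T2 q 1 = 1.
Proof.
  intros. rewrite F_cf by auto. unfold yv. replace (1 + (1 - 1) * Tq T1 T2 q) with 1 by ring.
  rewrite gpoly_one by (apply (Qnn P kmax T1 T2 H)). apply (Qsum P kmax T1 T2 H).
Qed.

Lemma exists_smallest : forall P kmax T1 T2 q, Hyp P kmax T1 T2 -> 0 <= q <= 1 ->
  exists u, smallest_fp P kmax T1 T2 q u.
Proof.
  intros P kmax T1 T2 q H Hq.
  destruct (classic (exists z, 0 <= z < 1 /\ Fq P kmax T1 T2 q z = z)) as [[z [Hz Hf]]|Hno].
  - exists z; apply fp_smallest; auto.
  - exists 1. split; [lra|]. split; [symmetry; apply F_one; auto|].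
    intros v Hv Hfv. destruct (Rle_lt_dec 1 v); auto.
    exfalso; apply Hno; exists v; split; [lra|auto].
Qed.

Lemma ustar_eq : forall P kmax T1 T2 q u, Hyp P kmax T1 T2 -> smallest_fp P kmax T1 T2 q u ->
  ustar P kmax T1 T2 q = u.
Proof.
  intros P kmax T1 T2 q u H Hu. unfold ustar.
  pose proof (epsilon_spec (inhabits 0) (fun u => smallest_fp P kmax T1 T2 q u) (ex_intro _ u Hu)) as Hs.
  set (w := epsilon _ _) in *.
  destruct Hs as (Hw & Hwf & Hwm). destruct Hu as (Hu & Huf & Hum).
  apply Rle_antisym; [apply Hwm|apply Hum]; auto.
Qed.


Lemma ustar_spec : forall P kmax T1 T2 q, Hyp P kmax T1 T2 -> 0 <= q <= 1 ->
  smallest_fp P kmax T1 T2 q (ustar P kmax T1 T2 q).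
Proof.
  intros. destruct (exists_smallest P kmax T1 T2 q H H0) as [u Hu].
  rewrite (ustar_eq P kmax T1 T2 q u H Hu). auto.
Qed.

Lemma F_lipq : forall P kmax T1 T2 q q0 v, Hyp P kmax T1 T2 -> 0 <= q <= 1 -> 0 <= q0 <= 1 -> 0 <= v <= 1 ->
  Rabs (Fq P kmax T1 T2 q v - Fq P kmax T1 T2 q0 v) <= (K1 (Qex P kmax) kmax + 1) * Rabs (q - q0).
Proof.
  intros P kmax T1 T2 q q0 v H Hq Hq0 Hv. pose proof H as (HP & Hs & _ & Hm & H2 & H21 & H1).
  rewrite !F_cf by auto.
  pose proof (yv_bounds T1 T2 q v H2 H21 H1 Hq Hv). pose proof (yv_bounds T1 T2 q0 v H2 H21 H1 Hq0 Hv).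
  eapply Rle_trans; [apply gpoly_lip; [apply (Qnn P kmax T1 T2 H)|lra|lra]|].
  pose proof (K1_nn _ kmax (Qnn P kmax T1 T2 H)).
  replace (yv T1 T2 q v - yv T1 T2 q0 v) with ((v - 1) * (T2 - T1) * (q - q0)) by (unfold yv, Tq; ring).
  rewrite !Rabs_mult.
  assert (Rabs (v - 1) <= 1) by (rewrite Rabs_left1 by lra; lra).
  assert (Rabs (T2 - T1) <= 1) by (rewrite Rabs_left1 by lra; lra).
  pose proof (Rabs_pos (v-1)). pose proof (Rabs_pos (T2-T1)). pose proof (Rabs_pos (q-q0)).
  assert (Rabs (v - 1) * Rabs (T2 - T1) * Rabs (q - q0) <= Rabs (q - q0)).
  { assert (Rabs (v - 1) * Rabs (T2 - T1) <= 1) by nra. nra. }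
  nra.
Qed.

Lemma F0_nn : forall P kmax T1 T2 q, Hyp P kmax T1 T2 -> 0 <= q <= 1 -> 0 <= Fq P kmax T1 T2 q 0.
Proof.
  intros P kmax T1 T2 q H Hq. pose proof H as (HP & Hs & _ & Hm & H2 & H21 & H1).
  rewrite F_cf by auto. pose proof (yv_bounds T1 T2 q 0 H2 H21 H1 Hq ltac:(lra)).
  apply cond_pos_sum. intros; apply Rmult_le_pos; [apply (Qnn P kmax T1 T2 H)|apply pow_le; lra].
Qed.

Lemma u_cont : forall P kmax T1 T2 q0 u0, Hyp P kmax T1 T2 -> 0 <= q0 <= 1 ->
  smallest_fp P kmax T1 T2 q0 u0 -> u0 < 1 ->
  forall eps, 0 < eps -> exists delta, 0 < delta /\ forall q, 0 <= q <= 1 -> Rabs (q - q0) < delta ->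
    Rabs (ustar P kmax T1 T2 q - u0) < eps.
Proof.
  intros P kmax T1 T2 q0 u0 H Hq0 Hs0 Hu1 eps Heps.
  pose proof H as (HP & Hs & _ & Hm & H2 & H21 & H1).
  destruct Hs0 as (Hu0 & Hfix0 & _).
  set (Q := Qex P kmax) in *.
  set (x0 := yv T1 T2 q0 u0). set (T0 := Tq T1 T2 q0). set (a := gder Q kmax x0).
  assert (Hc : T0 * a < 1) by (apply fp_slope; auto; lra).
  set (c := 1 - T0 * a).
  pose proof (K2_nn Q kmax (Qnn P kmax T1 T2 H)) as HK2.
  pose proof (K1_nn Q kmax (Qnn P kmax T1 T2 H)) as HK1.
  set (M2 := K2 Q kmax + 1). set (M1 := K1 Q kmax + 1).
  assert (Hc0 : 0 < c) by (unfold c; lra).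
  set (e := Rmin eps (Rmin (1 - u0) (c / (2 * M2)))).
  assert (He : 0 < e /\ e <= eps /\ e <= 1 - u0 /\ e <= c / (2 * M2)).
  { unfold e. repeat split.
    - repeat apply Rmin_glb_lt; auto; [lra|]. apply Rdiv_lt_0_compat; unfold M2; lra.
    - apply Rmin_l.
    - eapply Rle_trans; [apply Rmin_r|apply Rmin_l].
    - eapply Rle_trans; [apply Rmin_r|apply Rmin_r]. }
  destruct He as (He0 & Heeps & He1 & Hec).
  assert (HeM : M2 * e <= c / 2).
  { apply Rmult_le_compat_l with (r := M2) in Hec; [|unfold M2; lra].
    replace (M2 * (c / (2 * M2))) with (c / 2) in Hec by (field; unfold M2; lra). lra. }
  pose proof (Tq_bounds T1 T2 q0 H21 Hq0) as HT0. fold T0 in HT0.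
  set (w := u0 + e).
  assert (Hup : Fq P kmax T1 T2 q0 w - w <= - c * e / 2).
  { rewrite F_cf by auto. rewrite F_cf in Hfix0 by auto. fold Q in Hfix0 |- *.
    pose proof (yv_bounds T1 T2 q0 w H2 H21 H1 Hq0 ltac:(unfold w; lra)).
    pose proof (yv_bounds T1 T2 q0 u0 H2 H21 H1 Hq0 ltac:(lra)).
    pose proof (gpoly_taylor Q kmax (Qnn P kmax T1 T2 H) (yv T1 T2 q0 w) x0 ltac:(lra) ltac:(unfold x0; lra)) as Ht.
    fold a in Ht.
    replace (yv T1 T2 q0 w - x0) with (T0 * e) in Ht by (unfold x0, w, T0, yv; ring).
    pose proof (Rle_trans _ _ _ (Rle_abs _) Ht) as Ht2. clear Ht. rename Ht2 into Ht.
    assert (K2 Q kmax * (T0 * e) ^ 2 <= M2 * e * e).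
    { unfold M2. assert ((T0 * e)^2 <= e * e) by (replace ((T0*e)^2) with (T0*T0*(e*e)) by ring; assert (T0*T0 <= 1) by nra; nra). nra. }
    assert (M2 * e * e <= c / 2 * e) by nra.
    fold x0 in Hfix0. assert (Ea : a * (T0 * e) = e - c * e) by (unfold c; ring). rewrite Ea in Ht. assert (Hw: w = u0 + e) by reflexivity. lra. }
  assert (Hlow : forall v, 0 <= v <= u0 - e -> Fq P kmax T1 T2 q0 v - v >= c * e).
  { intros v Hv. pose proof (F_tangent P kmax T1 T2 q0 u0 v H Hq0 Hu0 ltac:(lra)) as Ht.
    fold Q T0 x0 a c in Ht. rewrite <- Hfix0 in Ht. nra. }
  assert (HM1 : 0 < M1) by (unfold M1; lra).
  exists (c * e / (4 * M1)). split; [apply Rdiv_lt_0_compat; nra|].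
  intros q Hq Hqd.
  assert (HL : forall v, 0 <= v <= 1 -> Rabs (Fq P kmax T1 T2 q v - Fq P kmax T1 T2 q0 v) < c * e / 4).
  { intros v Hv. eapply Rle_lt_trans; [apply F_lipq; auto|]. fold Q M1.
    apply Rmult_lt_compat_l with (r := M1) in Hqd; auto.
    replace (M1 * (c * e / (4 * M1))) with (c * e / 4) in Hqd by (field; lra). lra. }
  assert (Hz : exists z, 0 <= z < w /\ Fq P kmax T1 T2 q z = z).
  { pose proof (HL w ltac:(unfold w; lra)) as Hw. apply Rabs_def2 in Hw.
    destruct (Rle_lt_or_eq_dec _ _ (F0_nn P kmax T1 T2 q H Hq)) as [Hpos|Hzero].
    - set (f := fun v => v - gpoly Q kmax (yv T1 T2 q v)).
      assert (Hcont : continuity f).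
      { intros y. unfold f. apply continuity_pt_minus; [reg|].
        apply (continuity_pt_comp (fun v => yv T1 T2 q v) (gpoly Q kmax)).
        - unfold yv; reg.
        - apply gpoly_cont, (Qnn P kmax T1 T2 H). }
      assert (Hf0 : f 0 < 0) by (unfold f, Q; rewrite <- F_cf by auto; lra).
      assert (Hfw : 0 < f w) by (unfold f, Q; rewrite <- F_cf by auto; lra).
      destruct (IVT f 0 w Hcont ltac:(unfold w; lra) Hf0 Hfw) as [z [Hzb Hzf]].
      exists z. unfold f, Q in Hzf. rewrite <- F_cf in Hzf by auto.
      split; [|lra]. split; [lra|]. destruct (Rle_lt_or_eq_dec _ _ (proj2 Hzb)); auto.
      subst z. lra.
    - exists 0. split; [unfold w; lra|auto]. }
  destruct Hz as [z [Hzr Hzf]].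
  assert (Hzs : smallest_fp P kmax T1 T2 q z) by (apply fp_smallest; auto; unfold w in Hzr; lra).
  rewrite (ustar_eq P kmax T1 T2 q z H Hzs).
  apply Rabs_def1.
  - unfold w in Hzr; lra.
  - destruct (Rle_lt_dec z (u0 - e)) as [Hle|Hgt]; [|lra].
    exfalso. pose proof (Hlow z ltac:(lra)). pose proof (HL z ltac:(unfold w in Hzr; lra)) as Hz2.
    apply Rabs_def2 in Hz2. lra.
Qed.


Lemma deriv_core : forall c b K1 K2 KP T0 k h d u u0 eQ eP eta,
  0 < c -> 0 <= K1 -> 0 <= K2 -> 0 <= KP -> 0 <= T0 <= 1 -> 0 <= k <= 1 -> 0 <= u <= 1 -> 0 < eta ->
  c * d = k * h * (1 - u) + T0 * eQ ->
  Rabs eQ <= K2 * d ^ 2 -> Rabs (u - u0) <= K1 * Rabs d -> Rabs eP <= KP * d ^ 2 ->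
  Rabs d <= 2 * eta -> Rabs h <= eta -> 2 * eta <= c / (2 * (K2 + 1)) ->
  Rabs (b * d + eP - b * (k * (1 - u0) / c) * h) <=
    Rabs h * (eta * ((2 / c) * (Rabs b * ((K1 + 1) + 2 * (K2 + 1)) / c + 2 * (KP + 1)))).
Proof.
  intros c b K1 K2 KP T0 k h d u u0 eQ eP eta Hc HK1 HK2 HKP HT0 Hk Hu Heta Hd HeQ Hdu HeP HD HH Hsm.
  set (D := Rabs d) in *. set (Hh := Rabs h) in *.
  assert (HD0 : 0 <= D) by apply Rabs_pos. assert (HH0 : 0 <= Hh) by apply Rabs_pos.
  assert (Hd2 : d ^ 2 = D * D) by (unfold D; rewrite <- Rabs_mult, Rabs_right by (apply Rle_ge, Rle_0_sqr); ring).
  assert (S1 : c * D <= Hh + K2 * (D * D)).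
  { replace (c * D) with (Rabs (c * d)) by (unfold D; rewrite Rabs_mult, Rabs_right by lra; reflexivity).
    rewrite Hd. eapply Rle_trans; [apply Rabs_triang|].
    rewrite !Rabs_mult. rewrite <- Hd2.
    assert (Rabs k <= 1) by (rewrite Rabs_right; lra).
    assert (Rabs (1 - u) <= 1) by (rewrite Rabs_right; lra).
    assert (Rabs T0 <= 1) by (rewrite Rabs_right; lra).
    pose proof (Rabs_pos k). pose proof (Rabs_pos (1-u)). pose proof (Rabs_pos T0). pose proof (Rabs_pos eQ).
    fold Hh.
    assert (Rabs k * Hh * Rabs (1 - u) <= Hh).
    { assert (Rabs k * Rabs (1 - u) <= 1) by nra. nra. }
    assert (Rabs T0 * Rabs eQ <= Rabs eQ) by nra. lra. }
  assert (S2 : c * D <= 2 * Hh).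
  { assert (K2 * (D * D) <= c / 2 * D).
    { assert (Hq : (K2 + 1) * D <= c / 2).
      { apply Rle_trans with ((K2 + 1) * (2 * eta)); [apply Rmult_le_compat_l; [lra|]; lra|].
        apply Rmult_le_compat_l with (r := K2 + 1) in Hsm; [|lra].
        replace ((K2 + 1) * (c / (2 * (K2 + 1)))) with (c / 2) in Hsm by (field; lra). lra. }
      nra. }
    lra. }
  set (x' := k * (1 - u0) / c).
  assert (E3 : c * (d - x' * h) = k * h * (u0 - u) + T0 * eQ).
  { unfold x'. replace (c * (d - k * (1 - u0) / c * h)) with (c * d - k * (1 - u0) * h) by (field; lra).
    rewrite Hd. ring. }
  assert (S3 : c * Rabs (d - x' * h) <= Hh * (K1 * D) + K2 * (D * D)).
  { replace (c * Rabs (d - x' * h)) with (Rabs (c * (d - x' * h))) by (rewrite Rabs_mult, (Rabs_right c) by lra; reflexivity).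
    rewrite E3. eapply Rle_trans; [apply Rabs_triang|]. rewrite !Rabs_mult. rewrite <- Hd2.
    assert (Rabs k <= 1) by (rewrite Rabs_right; lra).
    assert (Rabs T0 <= 1) by (rewrite Rabs_right; lra).
    pose proof (Rabs_pos k). pose proof (Rabs_pos T0). pose proof (Rabs_pos eQ).
    pose proof (Rabs_pos (u0 - u)).
    rewrite Rabs_minus_sym. fold Hh. fold D in Hdu.
    assert (Rabs k * Hh * Rabs (u - u0) <= Hh * (K1 * D)).
    { apply Rle_trans with (Hh * Rabs (u - u0)); [pose proof (Rabs_pos (u - u0)); assert (0 <= Hh * Rabs (u - u0)) by (apply Rmult_le_pos; lra); nra|]. apply Rmult_le_compat_l; lra. }
    assert (Rabs T0 * Rabs eQ <= Rabs eQ) by nra. lra. }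
  replace (b * d + eP - b * x' * h) with (b * (d - x' * h) + eP) by ring.
  eapply Rle_trans; [apply Rabs_triang|]. rewrite Rabs_mult, Hd2 in *.
  pose proof (Rabs_pos b) as Hb.
  assert (HDc : D <= 2 * Hh / c) by (apply Rmult_le_reg_l with c; [lra|]; field_simplify; lra).
  assert (HxD : Rabs (d - x' * h) <= D * (Hh * K1 + K2 * D) / c).
  { apply Rmult_le_reg_l with c; [lra|]. field_simplify; [|lra]. nra. }
  set (C1 := Rabs b * (K1 + 1 + 2 * (K2 + 1)) / c + 2 * (KP + 1)).
  assert (HbX : Rabs b * Rabs (d - x' * h) + Rabs eP <= D * C1 * eta).
  { assert (Rabs b * Rabs (d - x' * h) <= Rabs b * (D * (Hh * K1 + K2 * D) / c)) by (apply Rmult_le_compat_l; lra).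
    assert (Hh * K1 + K2 * D <= eta * (K1 + 1 + 2 * (K2 + 1))) by nra.
    assert (Rabs b * (D * (Hh * K1 + K2 * D) / c) <= D * eta * (Rabs b * (K1 + 1 + 2 * (K2 + 1)) / c)).
    { unfold Rdiv. apply Rle_trans with (D * (Rabs b * / c) * (Hh * K1 + K2 * D)); [right; ring|].
      apply Rle_trans with (D * (Rabs b * / c) * (eta * (K1 + 1 + 2 * (K2 + 1)))); [|right; ring].
      apply Rmult_le_compat_l; [|lra]. apply Rmult_le_pos; [lra|]. apply Rmult_le_pos; [lra|].
      left; apply Rinv_0_lt_compat; lra. }
    assert (KP * (D * D) <= D * eta * (2 * (KP + 1))) by (assert (0 <= KP * D) by (apply Rmult_le_pos; lra); nra).
    unfold C1. nra. }
  apply Rle_trans with (D * C1 * eta); [lra|].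
  assert (0 <= C1).
  { unfold C1. apply Rplus_le_le_0_compat; [|lra]. unfold Rdiv. apply Rmult_le_pos; [nra|].
    left; apply Rinv_0_lt_compat; lra. }
  apply Rle_trans with (2 * Hh / c * C1 * eta).
  { apply Rmult_le_compat_r; [lra|]. apply Rmult_le_compat_r; lra. }
  right. unfold C1. field. lra.
Qed.


Lemma b_pos : forall P kmax T1 T2 x, Hyp P kmax T1 T2 -> 0 < x -> 0 < gder P kmax x.
Proof.
  intros P kmax T1 T2 x H Hx. pose proof H as (HP & Hs & _ & Hm & _).
  destruct (classic (exists j, (1 <= j <= kmax)%nat /\ 0 < P j)) as [[j [Hj HPj]]|Hno].
  - apply (sum_pos_one _ kmax j).
    + intros k; apply Rmult_le_pos; [apply HP|apply Rmult_le_pos; [apply pos_INR|apply pow_le; lra]].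
    + lia.
    + apply Rmult_lt_0_compat; [auto|]. apply Rmult_lt_0_compat; [apply lt_0_INR; lia|apply pow_lt; lra].
  - exfalso. assert (mean_deg P kmax = 0); [|lra].
    unfold mean_deg. rewrite (sum_eq _ (fun _ => 0)).
    + rewrite sum_cte. ring.
    + intros i Hi. destruct i as [|i]; [simpl; ring|].
      destruct (Rle_lt_or_eq_dec 0 _ (HP (S i))) as [Hl|He].
      * exfalso; apply Hno; exists (S i); split; [lia|auto].
      * rewrite <- He; ring.
Qed.

Lemma psi_cf : forall P kmax T1 T2 q, Hyp P kmax T1 T2 ->
  psi P kmax T1 T2 q = gpoly P kmax (yv T1 T2 q (ustar P kmax T1 T2 q)).
Proof. intros. unfold psi. apply G_cf; auto. Qed.

Theorem lemma3 (P : nat -> R) (kmax : nat) (T1 T2 : R)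
  (HPnn : forall k, 0 <= P k)
  (HPsupp : forall k, (kmax < k)%nat -> P k = 0)
  (HPsum : sum_f_R0 P kmax = 1)
  (Hmean : 0 < mean_deg P kmax)
  (HT2 : 0 < T2) (HT21 : T2 < T1) (HT1 : T1 < 1) :
  forall q, 0 <= q <= 1 ->
    0 < psi P kmax T1 T2 q < 1 ->
    exists l, has_deriv_on01 (psi P kmax T1 T2) q l /\ 0 < l.
Proof.
  intros q0 Hq0 Hpsi.
  assert (H : Hyp P kmax T1 T2) by (repeat split; auto).
  pose proof (ustar_spec P kmax T1 T2 q0 H Hq0) as Hs0.
  set (u0 := ustar P kmax T1 T2 q0) in *.
  pose proof Hs0 as (Hu0 & Hfix0 & _).
  rewrite (psi_cf P kmax T1 T2 q0 H) in Hpsi. fold u0 in Hpsi.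
  assert (Hu1 : u0 < 1).
  { destruct (Rlt_or_le u0 1) as [|Hge]; auto. exfalso.
    assert (u0 = 1) by lra. rewrite H0 in Hpsi. unfold yv in Hpsi.
    replace (1 + (1 - 1) * Tq T1 T2 q0) with 1 in Hpsi by ring.
    rewrite gpoly_one in Hpsi by auto. lra. }
  set (Q := Qex P kmax).
  set (x0 := yv T1 T2 q0 u0). set (T0 := Tq T1 T2 q0). set (a := gder Q kmax x0).
  set (b := gder P kmax x0).
  pose proof (yv_bounds T1 T2 q0 u0 HT2 HT21 HT1 Hq0 Hu0) as Hx0. fold x0 in Hx0.
  assert (Hb : 0 < b) by (apply (b_pos P kmax T1 T2); auto; lra).
  assert (Hc : T0 * a < 1) by (apply fp_slope; auto; lra).
  set (c := 1 - T0 * a).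
  assert (Hc0 : 0 < c) by (unfold c; lra).
  pose proof (Tq_bounds T1 T2 q0 HT21 Hq0) as HT0. fold T0 in HT0.
  rewrite F_cf in Hfix0 by auto. fold Q x0 in Hfix0.
  set (k := T1 - T2).
  exists (b * (k * (1 - u0) / c)). split.
  2:{ apply Rmult_lt_0_compat; auto. apply Rdiv_lt_0_compat; auto. unfold k; nra. }
  intros eps Heps.
  pose proof (K1_nn Q kmax (Qnn P kmax T1 T2 H)) as HK1.
  pose proof (K2_nn Q kmax (Qnn P kmax T1 T2 H)) as HK2.
  pose proof (K2_nn P kmax HPnn) as HKP.
  set (K1Q := K1 Q kmax) in *. set (K2Q := K2 Q kmax) in *. set (KP := K2 P kmax) in *.
  set (C' := (2 / c) * (Rabs b * ((K1Q + 1) + 2 * (K2Q + 1)) / c + 2 * (KP + 1))).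
  assert (HC' : 0 < C').
  { unfold C'. apply Rmult_lt_0_compat; [apply Rdiv_lt_0_compat; lra|].
    apply Rplus_le_lt_0_compat; [|lra]. apply Rmult_le_pos; [|left; apply Rinv_0_lt_compat; lra].
    pose proof (Rabs_pos b). nra. }
  set (eta := Rmin (c / (4 * (K2Q + 1))) (eps / (2 * C'))).
  assert (Heta : 0 < eta /\ eta <= c / (4 * (K2Q + 1)) /\ eta <= eps / (2 * C')).
  { unfold eta; repeat split; [apply Rmin_glb_lt; apply Rdiv_lt_0_compat; lra|apply Rmin_l|apply Rmin_r]. }
  destruct Heta as (Heta0 & Heta1 & Heta2).
  destruct (u_cont P kmax T1 T2 q0 u0 H Hq0 Hs0 Hu1 eta Heta0) as [du [Hdu Hcont]].
  exists (Rmin eta du). split; [apply Rmin_glb_lt; auto|].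
  intros h Hh0 Hhd Hqh.
  assert (Hh1 : Rabs h < eta) by (eapply Rlt_le_trans; [apply Hhd|apply Rmin_l]).
  assert (Hh2 : Rabs (q0 + h - q0) < du).
  { replace (q0 + h - q0) with h by ring. eapply Rlt_le_trans; [apply Hhd|apply Rmin_r]. }
  pose proof (Hcont (q0 + h) Hqh Hh2) as Hu.
  pose proof (ustar_spec P kmax T1 T2 (q0 + h) H Hqh) as Hs.
  set (u := ustar P kmax T1 T2 (q0 + h)) in *.
  destruct Hs as (Hu01 & Hfix & _).
  rewrite F_cf in Hfix by auto. fold Q in Hfix.
  rewrite !psi_cf by auto. fold u0 u x0.
  set (x := yv T1 T2 (q0 + h) u) in *.
  pose proof (yv_bounds T1 T2 (q0 + h) u HT2 HT21 HT1 Hqh Hu01) as Hx. fold x in Hx.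
  set (d := x - x0).
  assert (Hd : c * d = k * h * (1 - u) + T0 * (u - u0 - a * d)).
  { assert (d = k * h * (1 - u) + T0 * (u - u0)) by (unfold d, x, x0, yv, k, T0, Tq; ring).
    unfold c. replace ((1 - T0 * a) * d) with (d - T0 * a * d) by ring. rewrite H0 at 1. ring. }
  assert (HeQ : Rabs (u - u0 - a * d) <= K2Q * d ^ 2).
  { rewrite Hfix, Hfix0. apply gpoly_taylor; [apply (Qnn P kmax T1 T2 H)|lra|lra]. }
  assert (Hdu2 : Rabs (u - u0) <= K1Q * Rabs d).
  { rewrite Hfix, Hfix0. apply gpoly_lip; [apply (Qnn P kmax T1 T2 H)|lra|lra]. }
  assert (HeP : Rabs (gpoly P kmax x - gpoly P kmax x0 - b * d) <= KP * d ^ 2).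
  { apply gpoly_taylor; [auto|lra|lra]. }
  assert (HD : Rabs d <= 2 * eta).
  { assert (d = k * h * (1 - u) + T0 * (u - u0)) by (unfold d, x, x0, yv, k, T0, Tq; ring).
    rewrite H0. eapply Rle_trans; [apply Rabs_triang|]. rewrite !Rabs_mult.
    rewrite (Rabs_right k) by (unfold k; lra). rewrite (Rabs_right (1 - u)) by lra.
    rewrite (Rabs_right T0) by lra.
    assert (k * Rabs h * (1 - u) <= Rabs h).
    { pose proof (Rabs_pos h). assert (k * (1 - u) <= 1) by (unfold k; nra). nra. }
    assert (T0 * Rabs (u - u0) <= Rabs (u - u0)) by (pose proof (Rabs_pos (u - u0)); nra).
    lra. }
  assert (Hsm : 2 * eta <= c / (2 * (K2Q + 1))).
  { replace (c / (2 * (K2Q + 1))) with (2 * (c / (4 * (K2Q + 1)))) by (field; lra). lra. }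
  assert (HT0' : 0 <= T0 <= 1) by lra.
  assert (Hk' : 0 <= k <= 1) by (unfold k; lra).
  assert (Hh' : Rabs h <= eta) by lra.
  pose proof (deriv_core c b K1Q K2Q KP T0 k h d u u0 (u - u0 - a * d)
     (gpoly P kmax x - gpoly P kmax x0 - b * d) eta Hc0 HK1 HK2 HKP HT0' Hk'
     Hu01 Heta0 Hd HeQ Hdu2 HeP HD Hh' Hsm) as Hcore.
  fold C' in Hcore.
  replace (b * d + (gpoly P kmax x - gpoly P kmax x0 - b * d)) with (gpoly P kmax x - gpoly P kmax x0) in Hcore by ring.
  assert (Hhp : 0 < Rabs h) by (apply Rabs_pos_lt; auto).
  replace ((gpoly P kmax x - gpoly P kmax x0) / h - b * (k * (1 - u0) / c)) with
    ((gpoly P kmax x - gpoly P kmax x0 - b * (k * (1 - u0) / c) * h) / h) by (field; repeat split; try lra; auto).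
  unfold Rdiv at 1. rewrite Rabs_mult, Rabs_inv.
  apply Rmult_lt_reg_r with (Rabs h); auto. rewrite Rmult_assoc, Rinv_l by lra.
  rewrite Rmult_1_r.
  eapply Rle_lt_trans; [apply Hcore|].
  assert (eta * C' < eps).
  { apply Rmult_le_compat_r with (r := C') in Heta2; [|lra].
    replace (eps / (2 * C') * C') with (eps / 2) in Heta2 by (field; lra). lra. }
  nra.
Qed.
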